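(* For every $k\ge1$, $gp_k(\mathbf y)=\hat p^K_k(\mathbf y)\big|_{\beta=-1}$ and $gq_k(\mathbf y)=\hat q^K_k(\mathbf y)\big|_{\beta=-1}$.
   Context: $K$-theoretic formal group law: $u+_Fv=u+v+\beta uv$ with $\beta$ invertible, so $\bar u=-u/(1+\beta u)$. Let $\Delta(t;\mathbf y)=\prod_{j\ge1}\frac{1-\bar t\,y_j}{1-t\,y_j}$ for variables $\mathbf y=(y_1,y_2,\ldots)$. Define the symmetric functions $\hat q^K_k(\mathbf y)$ and $\hat p^K_k(\mathbf y)$ ($k\ge0$) by $\Delta(t;\mathbf y)=\sum_{k\ge0}t^k\hat q^K_k(\mathbf y)=\sum_{k\ge0}[[t]]^k\hat p^K_k(\mathbf y)$, where $[[t]]^0=1$ and $[[t]]^k=(t+_Ft)t^{k-1}=(2t+\beta t^2)t^{k-1}$ for $k\ge1$. For a strict partition $\lambda$, $Tab(\lambda)$ is the set of fillings of the (shifted) diagram of $\lambda$ by the ordered alphabet $1'<1<2'<2<\cdots$ with rows and columns weakly increasing, and $Tab'(\lambda)\subset Tab(\lambda)$ consists of those tableaux in which the leftmost box of every row contains a primed letter. For a tableau $T$ set $\mathbf y^T=\prod_{i}y_i^{T_C(i)}\prod_iy_i^{T_R(i')}$, where $T_C(i)$ is the number of columns of $T$ containing the letter $i$ and $T_R(i')$ is the number of rows of $T$ containing $i'$. Then $gp_\lambda(\mathbf y)=\sum_{T\in Tab'(\lambda)}\mathbf y^T$ and $gq_\lambda(\mathbf y)=\sum_{T\in Tab(\lambda)}\mathbf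 y^T$; $gp_k,gq_k$ denote these for the one-row shape $\lambda=(k)$. *)

(* Defs.v *)
From HB Require Import structures.
From mathcomp Require Import all_boot all_order all_algebra.
Set Implicit Arguments. Unset Strict Implicit. Unset Printing Implicit Defensive.
Import Order.TTheory GRing.Theory Num.Theory.
Local Open Scope ring_scope.

Definition fps (R : comNzRingType) := nat -> R.

Section FPS.
Variable R : comNzRingType.
Definition fone : fps R := fun m => (m == 0%N)%:R.
Definition fmul (f g : fps R) : fps R :=
  fun m => \sum_(i < m.+1) f i * g (m - i)%N.
Definition fsub (f g : fps R) : fps R := fun m => f m - g m.
Definition fscale (c : R) (f : fps R) : fps R := fun m => c * f m.
Definition tpow (k : nat) : fps R := fun m => (m == k)%:R.
(* 1/(1 - a t) = sum_m a^m t^m *)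
Definition geom (a : R) : fps R := fun m => a ^+ m.

(* K-theoretic FGL with parameter beta; u = t:
   tbar = -t/(1+beta t) = - t * (1/(1 - (-beta) t)) *)
Definition tbar (beta : R) : fps R := fscale (-1) (fmul (tpow 1) (geom (- beta))).

(* Delta(t;y) = prod_j (1 - tbar y_j)/(1 - t y_j), for variables y_0..y_{n-1}
   (all further variables set to 0) *)
Definition Delta (beta : R) (n : nat) (y : 'I_n -> R) : fps R :=
  \big[fmul/fone]_(j < n) fmul (fsub fone (fscale (y j) (tbar beta))) (geom (y j)).

Definition qhatK (beta : R) (n : nat) (y : 'I_n -> R) (k : nat) : R :=
  Delta beta y k.

(* [[t]]^0 = 1, [[t]]^k = (2t + beta t^2) t^(k-1) *)
Definition tbrak (beta : R) (k : nat) : fps R :=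
  if k is k'.+1 then
    fmul (fun m => 2%:R * (m == 1%N)%:R + beta * (m == 2%N)%:R) (tpow k')
  else fone.

(* p is the sequence (hat p^K_k)_k : Delta = sum_k [[t]]^k p_k, compared
   coefficientwise (only k <= m contribute to the coefficient of t^m). *)
Definition IsPhatK (beta : R) (n : nat) (y : 'I_n -> R) (p : nat -> R) : Prop :=
  forall m : nat, Delta beta y m = \sum_(k < m.+1) p k * tbrak beta k m.
End FPS.

(* letter (i, true) = i'  (primed),  (i, false) = i  (unprimed), i : 'I_n
   stands for the letter i+1; order 1' < 1 < 2' < 2 < ... *)
Definition letter (n : nat) := ('I_n * bool)%type.
Definition lrank (n : nat) (a : letter n) : nat := ((a.1 : nat).*2 + ~~ a.2)%N.
Definition lle (n : nat) : rel (letter n) := fun a b => (lrank a <= lrank b)%N.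

Definition inTab (n k : nat) (T : k.-tuple (letter n)) : bool := sorted (@lle n) T.
Definition inTab' (n k : nat) (T : k.-tuple (letter n)) : bool :=
  inTab T && (if tval T is a :: _ then a.2 else true).

(* y^T: T_C(i) = number of columns (= boxes, one row) containing i;
   T_R(i') = number of rows containing i' (0 or 1 here). *)
Definition ymon (R : comNzRingType) (n k : nat) (y : 'I_n -> R)
    (T : k.-tuple (letter n)) : R :=
  \prod_(i < n) y i ^+ (count (fun a : letter n => (a.1 == i) && ~~ a.2) T
                        + ((i, true) \in tval T))%N.

Definition gq (R : comNzRingType) (n : nat) (y : 'I_n -> R) (k : nat) : R :=
  \sum_(T : k.-tuple (letter n) | inTab T) ymon y T.
Definition gp (R : comNzRingType) (n : nat) (y : 'I_n -> R) (k : nat) : R :=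
  \sum_(T : k.-tuple (letter n) | inTab' T) ymon y T.

(* Main.v *)
Require Import Defs.
From HB Require Import structures.
From mathcomp Require Import all_boot all_order all_algebra.
From mathcomp Require Import zify ring.
Set Implicit Arguments. Unset Strict Implicit. Unset Printing Implicit Defensive.
Import Order.TTheory GRing.Theory Num.Theory.
Local Open Scope ring_scope.

Section Comb.
Variable n : nat.
Notation L := (letter n).

Definition pre (i : 'I_n) (c a : nat) (r : seq L) : seq L :=
  nseq a (i,true) ++ nseq (c - a) (i,false) ++ r.

Definition pairs (k : nat) : seq (nat * nat) :=
  [seq (c, a) | c <- iota 0 k.+1, a <- iota 0 c.+1].

Arguments pairs : simpl never.
Arguments pre : simpl never.

Fixpoint E (ix : seq 'I_n) (k : nat) : seq (seq L) :=
  if ix is i :: ix' then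
    [seq pre i x.1 x.2 r | x <- pairs k, r <- E ix' (k - x.1)]
  else if k is 0 then [:: [::]] else [::].

Definition olt : rel 'I_n := fun i j => (i < j)%N.

Lemma mem_pairs k c a : ((c, a) \in pairs k) = (c <= k)%N && (a <= c)%N.
Proof.
apply/allpairsPdep/andP => [[c' [a' [Hc Ha [-> ->]]]]|[Hc Ha]].
  by move: Hc Ha; rewrite !mem_iota; lia.
by exists c, a; rewrite !mem_iota; split => //; lia.
Qed.

Lemma E_cons i ix k : E (i :: ix) k =
  [seq pre i x.1 x.2 r | x <- pairs k, r <- E ix (k - x.1)].
Proof. by []. Qed.

Lemma memE_cons i ix k s : s \in E (i :: ix) k ->
  exists c a r, [/\ (c <= k)%N, (a <= c)%N, r \in E ix (k - c) & s = pre i c a r].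
Proof.
rewrite E_cons /allpairs_dep; move/flattenP => [t /mapP [[c a] Hx ->] /mapP [r Hr ->]].
move: Hx; rewrite mem_pairs => /andP [Hc Ha].
by exists c, a, r.
Qed.

Lemma memE_consP i ix k c a r : (c <= k)%N -> (a <= c)%N -> r \in E ix (k - c) ->
  pre i c a r \in E (i :: ix) k.
Proof.
move=> Hc Ha Hr; rewrite E_cons /allpairs_dep; apply/flattenP.
exists [seq pre i (c,a).1 (c,a).2 r0 | r0 <- E ix (k - (c,a).1)].
  by apply/mapP; exists (c, a) => //; rewrite mem_pairs Hc Ha.
by apply/mapP; exists r.
Qed.

Lemma E_mem ix k s : s \in E ix k -> size s = k /\ all (fun l : L => l.1 \in ix) s.
Proof.
elim: ix k s => [|i ix IH] k s /=.
  by case: k => [|k]; rewrite ?inE // => /eqP ->.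
move/memE_cons => [c [a [r [Hc Ha Hr ->]]]].
have [Hs Ha'] := IH _ _ Hr.
split.
  rewrite /pre !size_cat !size_nseq Hs /=. lia.
rewrite /pre !all_cat !all_nseq /= mem_head !orbT /=.
apply: sub_all Ha' => l /= Hl; by rewrite inE Hl orbT.
Qed.

Lemma lle_trans : transitive (@lle n).
Proof. by move=> a b c; rewrite /lle; apply: leq_trans. Qed.

Lemma lle_anti : antisymmetric (@lle n).
Proof.
move=> [i u] [j v]; rewrite /lle /lrank /= -eqn_leq => /eqP H.
have Huv : u = v.
  move: H; rewrite -!mul2n; case: u; case: v => //= H; lia.
subst v; have Hij : i = j :> nat by move: H; rewrite -!mul2n; lia.
by rewrite (val_inj Hij).
Qed.

Lemma E_sorted ix k s : sorted olt ix -> s \in E ix k -> sorted (@lle n) s.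
Proof.
elim: ix k s => [|i ix IH] k s /=.
  by case: k => [|k]; rewrite ?inE // => _ /eqP ->.
move=> Hsort /memE_cons [c [a [r [Hc Ha Hr ->]]]].
have Hsort' : sorted olt ix by move/path_sorted: Hsort.
have Hall : all (olt i) ix.
  by move: Hsort; rewrite path_sortedE //; [case/andP | move=> ? ? ?; apply: ltn_trans].
have [_ Hr'] := E_mem Hr.
have := IH _ _ Hsort' Hr.
rewrite /pre !sorted_pairwise; try exact: lle_trans.
move=> Hpr.
rewrite !pairwise_cat Hpr !andbT.
have pn : forall m (x : L), pairwise (@lle n) (nseq m x).
  move=> m x; elim: m => //= m IHm; rewrite IHm andbT all_nseq.
  by rewrite /lle leqnn orbT.
rewrite !pn !andbT.
have big : forall l : L, l \in r -> (lrank (i, false) < lrank l)%N.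
  move=> l Hl; move/allP: Hr' => /(_ l Hl) Hli.
  move/allP: Hall => /(_ _ Hli); rewrite /olt /lrank /=.
  case: l Hl Hli => [j b] /= _ _ Hij; rewrite -!mul2n; case: b => /=; lia.
apply/andP; split.
  rewrite /allrel all_nseq; apply/orP; right; rewrite /= all_cat all_nseq.
  apply/andP; split.
    by apply/orP; right; rewrite /lle /lrank /= -!mul2n; lia.
  apply/allP => l Hl; apply: ltnW; apply: leq_ltn_trans (big _ Hl).
  by rewrite /lrank /= -!mul2n; lia.
rewrite /= /allrel all_nseq; apply/orP; right => /=.
by apply/allP => l Hl; apply: ltnW; apply: big.
Qed.

Lemma perm3 (T : eqType) (q1 q2 q3 : pred T) (s : seq T) :
  all (fun l => (q1 l + q2 l + q3 l == 1)%N) s ->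
  perm_eq s (filter q1 s ++ filter q2 s ++ filter q3 s).
Proof.
move=> Hall; apply/permP => p; rewrite !count_cat !count_filter.
elim: s Hall => //= l s IHs /andP [Hl Hs]; rewrite IHs //.
move: Hl; case: (p l); case: (q1 l); case: (q2 l); case: (q3 l) => //= _; lia.
Qed.

Lemma sorted_head_all i ix : sorted olt (i :: ix) -> all (olt i) ix.
Proof.
by rewrite /= path_sortedE; [case/andP | move=> ? ? ?; apply: ltn_trans].
Qed.

Lemma notin_head i ix : sorted olt (i :: ix) -> i \notin ix.
Proof.
move/sorted_head_all => H; apply/negP => Hi.
by move/allP: H => /(_ _ Hi); rewrite /olt ltnn.
Qed.

Lemma E_complete ix s : sorted olt ix -> sorted (@lle n) s ->
  all (fun l : L => l.1 \in ix) s -> s \in E ix (size s).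
Proof.
elim: ix s => [|i ix IH] s Hix Hs Hall.
  by case: s Hs Hall.
have Hix' : sorted olt ix by move/path_sorted: Hix.
have Hni := notin_head Hix.
set t1 := filter (pred1 (i, true)) s.
set t2 := filter (pred1 (i, false)) s.
set r := filter (fun l : L => l.1 \in ix) s.
have Hperm : perm_eq s (t1 ++ t2 ++ r).
  apply: perm3; apply/allP => l Hl; move/allP: Hall => /(_ _ Hl).
  rewrite inE; case: l Hl => j b Hl /= /orP [/eqP Hj|Hj].
    clear Hl; subst j; rewrite (negbTE Hni). by case: b; rewrite !xpair_eqE !eqxx.
  have Hji : j != i by apply/eqP => Hji; subst j; rewrite Hj in Hni.
  rewrite Hj !xpair_eqE (negbTE Hji) /=. by [].
have Ht1 : t1 = nseq (size t1) (i, true) by apply/all_pred1P; apply: filter_all.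
have Ht2 : t2 = nseq (size t2) (i, false) by apply/all_pred1P; apply: filter_all.
have Hsz : size s = (size t1 + size t2 + size r)%N.
  by rewrite (perm_size Hperm) !size_cat addnA.
have Hr : r \in E ix (size r).
  apply: IH => //; first by apply: sorted_filter => //; exact: lle_trans.
  exact: filter_all.
have Hs' : t1 ++ t2 ++ r = pre i (size t1 + size t2) (size t1) r.
  by rewrite /pre addKn -Ht1 -Ht2.
have Hin : t1 ++ t2 ++ r \in E (i :: ix) (size s).
  rewrite Hs'; apply: memE_consP; rewrite ?leq_addr //; first by rewrite Hsz leq_addr.
  by rewrite Hsz addKn.
have Heq : s = t1 ++ t2 ++ r.
  apply: (sorted_eq lle_trans lle_anti) => //; first exact: E_sorted Hin.
by rewrite {1}Heq.
Qed.


Lemma count_pre_r (i : 'I_n) (ix : seq 'I_n) (r : seq L) b : i \notin ix -> all (fun l : L => l.1 \in ix) r ->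
  count (pred1 (i, b)) r = 0%N.
Proof.
move=> Hni Hr; rewrite (eq_in_count (a2:=pred0)) ?count_pred0 //.
move=> l Hl /=; apply/eqP => Hl'; subst l.
by move/allP: Hr => /(_ _ Hl) /=; rewrite (negbTE Hni).
Qed.

Lemma E_uniq ix k : sorted olt ix -> uniq (E ix k).
Proof.
elim: ix k => [|i ix IH] k Hix; first by case: k.
have Hix' : sorted olt ix by move/path_sorted: Hix.
have Hni := notin_head Hix.
rewrite E_cons; apply: allpairs_uniq_dep.
- rewrite /pairs; apply: allpairs_uniq_dep; first exact: iota_uniq.
    by move=> x _; exact: iota_uniq.
  by move=> [c1 a1] [c2 a2] _ _ /= [-> ->].
- by move=> x _; apply: IH.
move=> [[c1 a1] r1] [[c2 a2] r2] H1 H2 /= Heq.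
move: H1 H2 => /allpairsPdep [[c1' a1'] [r1' [Hx1 Hr1 E1]]].
move=> /allpairsPdep [[c2' a2'] [r2' [Hx2 Hr2 E2]]].
have [Ec1 Ea1] : c1 = c1' /\ a1 = a1' by move/(congr1 tag): E1 => [-> ->].
have Er1 : r1 = r1' := congr1 (fun p => (tagged p : seq L)) E1.
have [Ec2 Ea2] : c2 = c2' /\ a2 = a2' by move/(congr1 tag): E2 => [-> ->].
have Er2 : r2 = r2' := congr1 (fun p => (tagged p : seq L)) E2.
subst c1' a1' r1' c2' a2' r2'.
move: Hx1 Hx2; rewrite !mem_pairs => /andP [Hc1 Ha1] /andP [Hc2 Ha2].
have [_ Hr1'] := E_mem Hr1.
have [_ Hr2'] := E_mem Hr2.
have Ha : a1 = a2.
  move/(congr1 (count (pred1 (i, true)))): Heq.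
  rewrite /pre !count_cat !count_nseq /= !eqxx !(count_pre_r _ Hni) //.
  by rewrite xpair_eqE eqxx andbF /= !mul0n !addn0 !mul1n.
subst a2.
have Hc : c1 = c2.
  move/(congr1 (count (pred1 (i, false)))): Heq.
  rewrite /pre !count_cat !count_nseq /= !eqxx !(count_pre_r _ Hni) //.
  rewrite xpair_eqE eqxx andbF /= !mul0n !add0n !addn0 !mul1n; lia.
subst c2.
have Hr : r1 = r2.
  move: Heq; rewrite /pre !catA => /(congr1 (drop (size (nseq a1 (i, true) ++ nseq (c1 - a1) (i, false))))).
  by rewrite !drop_size_cat.
by subst r2.
Qed.
End Comb.

Lemma big_iota0 (R : nmodType) (F : nat -> R) N :
  \sum_(c <- iota 0 N) F c = \sum_(c < N) F c.
Proof. by rewrite -(big_mkord xpredT) /index_iota subn0. Qed.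

Lemma sum_delta (R : nzSemiRingType) N j (F : nat -> R) :
  \sum_(i < N) ((i : nat) == j)%:R * F i = (j < N)%:R * F j.
Proof.
elim: N => [|N IH]; first by rewrite big_ord0 mul0r.
rewrite big_ord_recr /= IH.
case H: (N == j).
  by move/eqP: H => <-; rewrite ltnn leqnn mul0r add0r.
by move/negbT: H => H; rewrite mul0r addr0 [in RHS]ltnS [in RHS]leq_eqVlt eq_sym (negbTE H).
Qed.

Lemma sum_delta_c (R : nzSemiRingType) N j (c : R) :
  \sum_(i < N) ((i : nat) == j)%:R * c = (j < N)%:R * c.
Proof. exact: (sum_delta N j (fun=> c)). Qed.

Section Wt.
Variable (R : comNzRingType) (n : nat) (y : 'I_n -> R).
Notation L := (letter n).

Definition wt (s : seq L) : R :=
  \prod_(i < n) y i ^+ (count (fun a : letter n => (a.1 == i) && ~~ a.2) s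
                        + ((i, true) \in s))%N.

Lemma wt_pre i (ix : seq 'I_n) c a (r : seq L) : i \notin ix ->
  all (fun l : L => l.1 \in ix) r -> (a <= c)%N ->
  wt (pre i c a r) = y i ^+ ((0 < a) + (c - a))%N * wt r.
Proof.
move=> Hni Hr Hac.
have Hr0 : forall j, j \notin ix -> count (fun a : letter n => (a.1 == j) && ~~ a.2) r = 0%N.
  move=> j Hj; rewrite (eq_in_count (a2:=pred0)) ?count_pred0 // => l Hl /=.
  apply/negbTE; apply/negP => /andP [/eqP Hlj _].
  by move/allP: Hr => /(_ _ Hl); rewrite Hlj (negbTE Hj).
have Hr1 : forall j, j \notin ix -> ((j, true) \in r) = false.
  move=> j Hj; apply/negbTE/negP => Hin.
  by move/allP: Hr => /(_ _ Hin) /=; rewrite (negbTE Hj).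
rewrite /wt (bigD1 i) //= [in RHS](bigD1 i) //= Hr0 // Hr1 // expr0 mul1r.
congr (_ * _).
  rewrite /pre !count_cat !count_nseq /= !mem_cat !mem_nseq Hr0 // Hr1 // eqxx /=.
  rewrite !xpair_eqE !eqxx /= mul0n add0n mul1n addn0 orbF.
  by rewrite andbT andbF orbF addnC.
apply: eq_bigr => j Hji.
rewrite /pre !count_cat !count_nseq /= !mem_cat !mem_nseq.
rewrite !xpair_eqE [i == j]eq_sym (negbTE Hji) /= !andbF !mul0n !add0n.
by [].
Qed.

Lemma sumE_cons (F : seq L -> R) i ix k :
  \sum_(s <- E (i :: ix) k) F s =
  \sum_(c < k.+1) \sum_(a < c.+1) \sum_(r <- E ix (k - c)) F (pre i c a r).
Proof.
rewrite E_cons big_allpairs_dep /pairs big_allpairs_dep (big_iota0 (fun c => \sum_(i2 <- iota 0 c.+1) \sum_(i0 <- E ix (k - c)) F (pre i c i2 i0))).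
apply: eq_bigr => c _; by rewrite big_iota0.
Qed.


Definition fac j : fps R := fmul (fsub (@fone R) (fscale (y j) (tbar (-1)))) (geom (y j)).

Lemma A_coef j a : fsub (@fone R) (fscale (y j) (tbar (-1))) a = y j ^+ (0 < a)%N.
Proof.
rewrite /fsub /fone /tbar /fscale /fmul /tpow /geom opprK.


under eq_bigr => i _ do rewrite expr1n.
rewrite sum_delta_c mulr1.
by case: a => [|a] /=; rewrite ?expr0 ?expr1; ring.
Qed.

Lemma fac_coef j c : fac j c = \sum_(a < c.+1) y j ^+ ((0 < a) + (c - a))%N.
Proof.
by rewrite /fac /fmul; apply: eq_bigr => a _; rewrite A_coef /geom exprD.
Qed.

Definition hp (s : seq L) : bool := if s is a :: _ then a.2 else false.
Definition Qs ix k := \sum_(s <- E ix k) wt s.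
Definition Ps ix k := \sum_(s <- E ix k) (hp s)%:R * wt s.

Lemma wt_nil : wt [::] = 1.
Proof. by rewrite /wt big1 // => i _; rewrite expr0. Qed.

Lemma Qs_cons i ix k : sorted (@olt n) (i :: ix) ->
  Qs (i :: ix) k = \sum_(c < k.+1) (\sum_(a < c.+1) y i ^+ ((0 < a) + (c - a))%N) * Qs ix (k - c).
Proof.
move=> Hix; have Hni := notin_head Hix.
rewrite /Qs sumE_cons; apply: eq_bigr => c _; rewrite mulr_suml.
apply: eq_bigr => a _; rewrite mulr_sumr big_seq [in RHS]big_seq.
apply: eq_bigr => r Hr; have [_ Hr'] := E_mem Hr.
by rewrite (wt_pre Hni Hr') // -ltnS.
Qed.

Definition gg i c : R := \sum_(a < c.+1) (0 < a)%:R * y i ^+ (1 + (c - a))%N.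

Lemma Ps_cons i ix k : sorted (@olt n) (i :: ix) ->
  Ps (i :: ix) k = \sum_(c < k.+1) gg i c * Qs ix (k - c) + Ps ix k.
Proof.
move=> Hix; have Hni := notin_head Hix.
have -> : Ps ix k = \sum_(c < k.+1) ((c : nat) == 0%N)%:R * Ps ix (k - c).
  by rewrite (sum_delta _ _ (fun c => Ps ix (k - c))) subn0 mul1r.
rewrite {1}/Ps sumE_cons.
rewrite -big_split /=; apply: eq_bigr => c _.
rewrite /gg /Qs /Ps mulr_suml.
have -> : ((c : nat) == 0%N)%:R * \sum_(s <- E ix (k - c)) (hp s)%:R * wt s =
   \sum_(a < c.+1) ((a : nat) == 0%N)%:R * (((c : nat) == 0%N)%:R * \sum_(s <- E ix (k - c)) (hp s)%:R * wt s).
  by rewrite sum_delta_c mul1r.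
rewrite -big_split /=; apply: eq_bigr => a _.
rewrite mulr_sumr !mulr_sumr -big_split /= big_seq [in RHS]big_seq.
apply: eq_bigr => r Hr; have [_ Hr'] := E_mem Hr.
have Hac : (a <= c)%N by rewrite -ltnS.
rewrite (wt_pre Hni Hr' Hac).
move: Hac; case: a => a /= _; case: c Hr Hr' => c /= _ _ _.
case: a => [|a] Hac /=.
  case: c Hac => [|c] _ /=.
    by rewrite /pre /=; ring.
  by rewrite /pre /=; ring.
by rewrite /pre /=; ring.
Qed.

Lemma gg_S i c : gg i c.+1 = y i ^+ c.+1 + gg i c.
Proof.
rewrite /gg big_ord_recl /= mul0r add0r.
rewrite [in RHS]big_ord_recl /= mul0r add0r.
rewrite big_ord_recl; congr (_ + _).
  by rewrite /bump /= mul1r subn1 add1n.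

Qed.

Lemma f_gg i c : \sum_(a < c.+1) y i ^+ ((0 < a) + (c - a))%N = y i ^+ c + gg i c.
Proof.
rewrite /gg big_ord_recl [in RHS]big_ord_recl /= mul0r add0r add0n subn0.
congr (_ + _); apply: eq_bigr => a _; by rewrite mul1r.
Qed.

Lemma Ps_nil k : Ps [::] k = 0.
Proof. by case: k => [|k]; rewrite /Ps /= ?big_seq1 ?big_nil //= mul0r. Qed.

Lemma Qs_nil k : Qs [::] k = (k == 0%N)%:R.
Proof. by case: k => [|k]; rewrite /Qs /= ?big_seq1 ?big_nil ?wt_nil. Qed.


Lemma gg_0 i : gg i 0 = 0.
Proof. by rewrite /gg big_ord1 mul0r. Qed.

Lemma key ix : sorted (@olt n) ix -> forall k,
  Qs ix k = 2%:R * Ps ix k - (0 < k)%:R * Ps ix k.-1 + (k == 0%N)%:R.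
Proof.
elim: ix => [|i ix IH] Hix k.
  by rewrite Qs_nil !Ps_nil; ring.
have Hix' : sorted (@olt n) ix by move/path_sorted: Hix.
rewrite Qs_cons // !Ps_cons //.
set G := fun m => \sum_(c < m.+1) gg i c * Qs ix (m - c).
rewrite -/(G k) -/(G k.-1).
rewrite (eq_bigr (fun c : 'I_k.+1 => y i ^+ c * Qs ix (k - c) + gg i c * Qs ix (k - c))); last first.
  by move=> c _; rewrite f_gg mulrDl.
rewrite big_split /= -/(G k).
have key1 : \sum_(c < k.+1) y i ^+ c * Qs ix (k - c) = Qs ix k + G k - (0 < k)%:R * G k.-1.
  rewrite /G; case: k => [|m].
    by rewrite !big_ord1 gg_0 /=; ring.
  rewrite big_ord_recl [in X in _ = _ + X - _]big_ord_recl /= gg_0 subn0 expr0.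
  rewrite !mul1r mul0r add0r -addrA; congr (_ + _).
  rewrite -sumrB; apply: eq_bigr => c _.
  by rewrite /bump /= add1n subSS gg_S; ring.
rewrite key1 IH //; ring.
Qed.

End Wt.

Lemma sum_tuple (R : nmodType) (X : finType) k (P : pred (seq X)) (F : seq X -> R)
    (Lst : seq (seq X)) : uniq Lst -> (forall s, (s \in Lst) = (size s == k) && P s) ->
  \sum_(T : k.-tuple X | P T) F T = \sum_(s <- Lst) F s.
Proof.
move=> HU HL; rewrite -big_filter.
rewrite -(big_map (fun T : k.-tuple X => tval T) xpredT F).
apply: perm_big; apply: uniq_perm => //.
  by rewrite map_inj_uniq ?filter_uniq ?index_enum_uniq //; exact: val_inj.
move=> s; rewrite HL; apply/mapP/andP => [[T HT ->]|[Hs HP]].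
  by move: HT; rewrite mem_filter => /andP [HP _]; rewrite size_tuple.
by exists (Tuple Hs); rewrite // mem_filter mem_index_enum andbT.
Qed.

Lemma ord_sorted n : sorted (@olt n) (index_enum 'I_n).
Proof.
have -> : index_enum 'I_n = enum 'I_n by rewrite enumT; unlock.
have := iota_ltn_sorted 0 n; rewrite -val_enum_ord sorted_map.
by [].
Qed.

Lemma memE_ord n k (s : seq (letter n)) :
  (s \in E (index_enum 'I_n) k) = (size s == k) && sorted (@lle n) s.
Proof.
apply/idP/andP => [H|[/eqP Hs Hsort]].
  have [Hs _] := E_mem H; split; first by rewrite Hs.
  exact: E_sorted (ord_sorted n) H.
rewrite -Hs; apply: E_complete => //; first exact: ord_sorted.
by apply/allP => l _; rewrite mem_index_enum.
Qed.

Section Final.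
Variable (R : comNzRingType) (n : nat) (y : 'I_n -> R).

Lemma Qs_prod ix : sorted (@olt n) ix -> forall k,
  Qs y ix k = (\big[@fmul R/@fone R]_(j <- ix) fac y j) k.
Proof.
elim: ix => [|i ix IH] Hix k.
  by rewrite Qs_nil big_nil /fone.
have Hix' : sorted (@olt n) ix by move/path_sorted: Hix.
rewrite Qs_cons // big_cons {2}/fmul; apply: eq_bigr => c _.
by rewrite fac_coef IH.
Qed.

Lemma gq_Qs k : gq y k = Qs y (index_enum 'I_n) k.
Proof.
rewrite /gq /inTab /Qs.
apply: (@sum_tuple _ _ k (sorted (@lle n)) (wt y) (E (index_enum 'I_n) k)).
  exact: E_uniq (ord_sorted n).
exact: memE_ord.
Qed.

Lemma Delta_Qs k : Delta (-1) y k = Qs y (index_enum 'I_n) k.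
Proof. by rewrite Qs_prod //; exact: ord_sorted. Qed.

Lemma gp_Ps k : (1 <= k)%N -> gp y k = Ps y (index_enum 'I_n) k.
Proof.
move=> Hk; rewrite /gp /Ps.
rewrite (eq_bigl (fun T : k.-tuple (letter n) => sorted (@lle n) T && hp T)); last first.
  move=> T; rewrite /inTab' /inTab; case Et: (tval T) => [|a s] //=.
  by have := size_tuple T; rewrite Et => H; move: Hk; rewrite -H.
rewrite big_mkcondr /=.
rewrite (eq_bigr (fun T : k.-tuple (letter n) => (hp T)%:R * wt y T)); last first.
  by move=> T _; case: (hp T); rewrite ?mul1r ?mul0r.
apply: (@sum_tuple _ _ k (sorted (@lle n)) (fun s => (hp s)%:R * wt y s) (E (index_enum 'I_n) k)).
  exact: E_uniq (ord_sorted n).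
exact: memE_ord.
Qed.

Lemma Ps0 : Ps y (index_enum 'I_n) 0 = 0.
Proof.
rewrite /Ps big_seq big1 // => s; rewrite memE_ord => /andP [/eqP Hs _].
by move/size0nil: Hs => ->; rewrite mul0r.
Qed.

Lemma fmul_tpow (f : fps R) k m : fmul f (tpow R k) m = (k <= m)%:R * f (m - k)%N.
Proof.
rewrite /fmul /tpow.
case: (leqP k m) => Hkm.
  rewrite mul1r.
  rewrite (eq_bigr (fun i : 'I_m.+1 => ((i : nat) == (m - k)%N)%:R * f i)); last first.
    move=> i _; rewrite mulrC; congr (_%:R * _); apply/eqP/eqP; have := ltn_ord i; lia.
  by rewrite sum_delta ltnS leq_subr mul1r.
rewrite mul0r big1 // => i _.
have -> : (m - i == k)%N = false by apply/negbTE/eqP; lia.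
by rewrite mulr0.
Qed.




Lemma tb_sum (p : nat -> R) m : \sum_(k < m.+1) p k * tbrak (-1) k m =
  (m == 0%N)%:R * p 0%N + (0 < m)%:R * (2%:R * p m) - (1 < m)%:R * p m.-1.
Proof.
case: m => [|m].
  by rewrite big_ord1 /tbrak /fone /=; ring.
rewrite big_ord_recl {1}/tbrak /fone /=.
have step : forall k : 'I_m.+1, p (bump 0 k) * tbrak (-1) (bump 0 k) m.+1 =
   2%:R * (((k:nat) == m)%:R * p k.+1) - (0 < m)%:R * (((k:nat) == m.-1)%:R * p k.+1).
  move=> k; rewrite /bump /= add1n /tbrak fmul_tpow /=.
  have Hk := ltn_ord k.
  have -> : (k <= m.+1)%N by lia.
  have e1 : (m.+1 - k == 1)%N = (k == m :> nat) by apply/eqP/eqP; lia.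
  have e2 : (m.+1 - k == 2)%N = (0 < m)%N && (k == m.-1 :> nat).
    by apply/eqP/andP => [H|[H1 /eqP H2]]; [split; [|apply/eqP]; lia | lia].
  rewrite e1 e2 -mulnb natrM /=; ring.
rewrite (eq_bigr _ (fun k _ => step k)) sumrB -!mulr_sumr.
rewrite (sum_delta _ _ (fun k => p k.+1)) (sum_delta _ _ (fun k => p k.+1)).
case: m {step} => [|m] /=; rewrite ?ltnSn ?(leqW (ltnSn _)) /=; ring.
Qed.

End Final.

Theorem mainTheorem10 (R : numFieldType) (n : nat) (y : 'I_n -> R) :
  (exists p : nat -> R, IsPhatK (-1) y p) /\
  (forall p : nat -> R, IsPhatK (-1) y p ->
     forall k : nat, (1 <= k)%N -> gp y k = p k) /\
  (forall k : nat, (1 <= k)%N -> gq y k = qhatK (-1) y k).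
Proof.
set ord := index_enum 'I_n.
have Hkey := key y (ord_sorted n).
have HP0 := Ps0 y.
split; [|split].
- exists (fun m => (m == 0%N)%:R + Ps y ord m) => m.
  rewrite (tb_sum (fun m => (m == 0%N)%:R + Ps y ord m)) Delta_Qs Hkey -/ord.
  case: m => [|[|m]] /=; rewrite ?HP0; ring.
- move=> p Hp; elim => [//|k IHk] _.
  rewrite gp_Ps //.
  have := Hp k.+1; rewrite tb_sum Delta_Qs Hkey -/ord /=.
  have H2 : (2%:R : R) != 0 by rewrite pnatr_eq0.
  move/eqP; rewrite -subr_eq0 => /eqP H.
  apply: (mulfI H2); apply/eqP; rewrite -subr_eq0; apply/eqP; rewrite -H.
  case: k IHk {H} => [|k] IHk /=.
    by rewrite HP0; ring.
  rewrite -(@gp_Ps _ _ y k.+1) // IHk //; ring.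
- by move=> k _; rewrite gq_Qs /qhatK Delta_Qs.
Qed.
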